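(* Let $(H,m,u,\Delta,\varepsilon,\omega)$ be a dual quasi-bialgebra over a field $\Bbbk$, and let $F:{}^{H}\mathfrak{M}\to {}^{H}\mathfrak{M}^{H}_{H}$ and $G:{}^{H}\mathfrak{M}^{H}_{H}\to {}^{H}\mathfrak{M}$ be the adjoint pair described in the context. The following assertions are equivalent. (i) The adjunction $(F,G)$ is an equivalence of categories. (ii) For each $M\in {}^{H}\mathfrak{M}^{H}_{H}$ there exists a $\Bbbk$-linear map $\tau:M\to M^{coH}$ such that $$\tau(mh)=\omega^{-1}[\tau(m_0)_{-1}\otimes m_1\otimes h]\,\tau(m_0)_0\quad\text{for all }h\in H,\ m\in M,$$ $$m_{-1}\otimes \tau(m_0)=\tau(m_0)_{-1}m_1\otimes \tau(m_0)_0\quad\text{for all }m\in M,$$ $$\tau(m_0)m_1=m\quad\text{for all }m\in M.$$ (iii) For each $M\in {}^{H}\mathfrak{M}^{H}_{H}$ there exists a $\Bbbk$-linear map $\tau:M\to M^{coH}$ such that $\tau(m_0)m_1=m$ for all $m\in M$ and $$\tau(mh)=m\,\varepsilon(h)\quad\text{for all }h\in H,\ m\in M^{coH}.$$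
   Context: A dual quasi-bialgebra is a datum $(H,m,u,\Delta,\varepsilon,\omega)$ where $(H,\Delta,\varepsilon)$ is a coassociative counital coalgebra over $\Bbbk$; $m:H\otimes H\to H$, $hk:=m(h\otimes k)$, and $u:\Bbbk\to H$, $1_H:=u(1)$, are coalgebra maps with $1_Hh=h=h1_H$; and $\omega:H\otimes H\otimes H\to\Bbbk$ (the reassociator) is convolution invertible with inverse $\omega^{-1}$, satisfies $\omega(h\otimes k\otimes l)=\varepsilon(h)\varepsilon(k)\varepsilon(l)$ whenever $1_H\in\{h,k,l\}$, the 3-cocycle condition $\omega(h_1\otimes k_1\otimes l_1m_1)\omega(h_2k_2\otimes l_2\otimes m_2)=\omega(k_1\otimes l_1\otimes m_1)\omega(h_1\otimes k_2l_2\otimes m_2)\omega(h_2\otimes k_3\otimes l_3)$, and quasi-associativity $h_1(k_1l_1)\omega(h_2\otimes k_2\otimes l_2)=\omega(h_1\otimes k_1\otimes l_1)(h_2k_2)l_2$ (Sweedler notation $\Delta(h)=h_1\otimes h_2$, summation understood). For a left $H$-comodule we write $\rho^l(m)=m_{-1}\otimes m_0$, for a right $H$-comodule $\rho^r(m)=m_0\otimes m_1$. ${}^{H}\mathfrak{M}$ is the category of left $H$-comodules. ${}^{H}\mathfrak{M}^{H}_{H}$ (right dual quasi-Hopf $H$-bicomodules) is the category whose objects are $H$-bicomodules $M$ (commuting left and right coactions; write $m_{-1}\otimes m_0\otimes m_1$) endowed with a linear map $M\otimes H\to M$, $m\otimes h\mapsto mh$, which is a bicomodule map when $M\otimes H$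 carries the codiagonal coactions $m\otimes h\mapsto m_{-1}h_1\otimes(m_0\otimes h_2)$ and $m\otimes h\mapsto (m_0\otimes h_1)\otimes m_1h_2$, and satisfies $m1_H=m$ and $(mh)l=\omega^{-1}(m_{-1}\otimes h_1\otimes l_1)\,m_0(h_2l_2)\,\omega(m_1\otimes h_3\otimes l_3)$; morphisms are bicolinear maps preserving the action. For $M$ a right comodule, $M^{coH}=\{m\in M: m_0\otimes m_1=m\otimes 1_H\}$; for $M\in{}^{H}\mathfrak{M}^{H}_{H}$, $M^{coH}$ is a left subcomodule. $G:{}^{H}\mathfrak{M}^{H}_{H}\to{}^{H}\mathfrak{M}$ is $G(M)=M^{coH}$. $F:{}^{H}\mathfrak{M}\to{}^{H}\mathfrak{M}^{H}_{H}$ is $F(V)=V\otimes H$ with $\rho^l(v\otimes h)=v_{-1}h_1\otimes(v_0\otimes h_2)$, $\rho^r(v\otimes h)=(v\otimes h_1)\otimes h_2$, $(v\otimes h)l=\omega^{-1}(v_{-1}\otimes h_1\otimes l_1)v_0\otimes h_2l_2$. $F$ is left adjoint to $G$, with counit $\epsilon_M:M^{coH}\otimes H\to M$, $x\otimes h\mapsto xh$, and unit $\eta_N:N\to (N\otimes H)^{coH}$, $n\mapsto n\otimes 1_H$. *)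

(* Defs.v *)
(* MathComp has no tensor products, so we construct the tensor product of
   vector spaces V (x) W over a field k as the quotient of formal sums
   sum c_i (v_i, w_i) by the relation "same value under every bilinear map
   into every k-vector space"; this is the usual tensor product (it has the
   universal property: tl b is well defined for every bilinear b, and the pure
   tensors tm v w span).  Linear maps out of tensor products are written via
   their associated multilinear maps (tl), exactly as Sweedler notation does. *)
From HB Require Import structures.
From mathcomp Require Import all_boot all_algebra.
From mathcomp Require Import boolp.
Set Implicit Arguments. Unset Strict Implicit. Unset Printing Implicit Defensive.
Import GRing.Theory.
Local Open Scope ring_scope.
Local Open Scope quotient_scope.

Section Lin.
Variable k : fieldType.
Definition lin (V W : lmodType k) (f : V -> W) :=
  forall (a : k) (x y : V), f (a *: x + y) = a *: f x + f y.
Definition bilin (V W U : lmodType k) (b : V -> W -> U) :=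
  (forall w, lin (fun v => b v w)) /\ (forall v, lin (b v)).
End Lin.

Section Tensor.
Variables (k : fieldType) (V W : lmodType k).
Definition fsum := seq (k * (V * W))%type.
Definition tsum (U : lmodType k) (b : V -> W -> U) (s : fsum) : U :=
  \sum_(x <- s) x.1 *: b x.2.1 x.2.2.
Definition teq (s t : fsum) : Prop :=
  forall (U : lmodType k) (b : V -> W -> U), bilin b -> tsum b s = tsum b t.
Definition teqb : rel fsum := fun s t => `[< teq s t >].
Lemma teqb_refl : reflexive teqb. Proof. by move=> s; apply/asboolP. Qed.
Lemma teqb_sym : symmetric teqb.
Proof. by move=> s t; apply/asboolP/asboolP => h U b hb; rewrite h. Qed.
Lemma teqb_trans : transitive teqb.
Proof. by move=> t s u /asboolP h1 /asboolP h2; apply/asboolP=> U b hb; rewrite h1 ?h2. Qed.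
Canonical teqb_equiv := EquivRel teqb teqb_refl teqb_sym teqb_trans.
Definition tensor := {eq_quot teqb_equiv}.
HB.instance Definition _ := Choice.on tensor.
Definition tl (U : lmodType k) (b : V -> W -> U) (x : tensor) : U := tsum b (repr x).
Definition tmk (s : fsum) : tensor := \pi_tensor s.
Lemma teq_repr (s : fsum) : teq (repr (tmk s)) s.
Proof.
have /asboolP // : teqb (repr (tmk s)) s.
by apply/(@eqquotP _ _ tensor); rewrite reprK.
Qed.
Lemma tl_pi (U : lmodType k) (b : V -> W -> U) s : bilin b -> tl b (tmk s) = tsum b s.
Proof. by move=> hb; rewrite /tl (teq_repr s hb). Qed.
Lemma tensor_ext (x y : tensor) :
  (forall (U : lmodType k) (b : V -> W -> U), bilin b -> tl b x = tl b y) -> x = y.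
Proof.
move=> h; rewrite -[x]reprK -[y]reprK; apply/(@eqquotP _ _ tensor); apply/asboolP => U b hb.
exact: h.
Qed.
Definition tadd (x y : tensor) : tensor := tmk (repr x ++ repr y).
Definition tzero : tensor := tmk [::].
Definition tscale (c : k) (x : tensor) : tensor :=
  tmk (map (fun z => (c * z.1, z.2)) (repr x)).
Definition topp (x : tensor) : tensor := tscale (-1) x.
Lemma tsum_cat (U : lmodType k) (b : V -> W -> U) s t : tsum b (s ++ t) = tsum b s + tsum b t.
Proof. by rewrite /tsum big_cat. Qed.
Lemma tsum_scale (U : lmodType k) (b : V -> W -> U) c s :
  tsum b (map (fun z => (c * z.1, z.2)) s) = c *: tsum b s.
Proof. by rewrite /tsum big_map scaler_sumr; apply: eq_bigr => z _; rewrite scalerA. Qed.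
Lemma tl_add (U : lmodType k) (b : V -> W -> U) x y : bilin b -> tl b (tadd x y) = tl b x + tl b y.
Proof. by move=> hb; rewrite tl_pi // tsum_cat. Qed.
Lemma tl_zero (U : lmodType k) (b : V -> W -> U) : bilin b -> tl b tzero = 0.
Proof. by move=> hb; rewrite tl_pi // /tsum big_nil. Qed.
Lemma tl_scale (U : lmodType k) (b : V -> W -> U) c x : bilin b -> tl b (tscale c x) = c *: tl b x.
Proof. by move=> hb; rewrite tl_pi // tsum_scale. Qed.
Lemma tl_opp (U : lmodType k) (b : V -> W -> U) x : bilin b -> tl b (topp x) = - tl b x.
Proof. by move=> hb; rewrite tl_scale // scaleN1r. Qed.
Lemma taddA : associative tadd.
Proof. by move=> x y z; apply: tensor_ext => U b hb; rewrite !tl_add // addrA. Qed.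
Lemma taddC : commutative tadd.
Proof. by move=> x y; apply: tensor_ext => U b hb; rewrite !tl_add // addrC. Qed.
Lemma tadd0 : left_id tzero tadd.
Proof. by move=> x; apply: tensor_ext => U b hb; rewrite !tl_add // tl_zero // add0r. Qed.
Lemma taddN : left_inverse tzero topp tadd.
Proof. by move=> x; apply: tensor_ext => U b hb; rewrite !tl_add // tl_opp // tl_zero // addNr. Qed.
HB.instance Definition _ := GRing.isZmodule.Build tensor taddA taddC tadd0 taddN.
Lemma tscaleA a b v : tscale a (tscale b v) = tscale (a * b) v.
Proof. by apply: tensor_ext => U f hf; rewrite !tl_scale // scalerA. Qed.
Lemma tscale1 : left_id 1 tscale.
Proof. by move=> x; apply: tensor_ext => U f hf; rewrite !tl_scale // scale1r. Qed.
Lemma tscaleDr : right_distributive tscale +%R.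
Proof. by move=> a x y; apply: tensor_ext => U f hf; rewrite !(tl_scale, tl_add) // scalerDr. Qed.
Lemma tscaleDl v : {morph tscale^~ v : a b / a + b}.
Proof. by move=> a b; apply: tensor_ext => U f hf; rewrite !(tl_scale, tl_add) // scalerDl. Qed.
HB.instance Definition _ := GRing.Zmodule_isLmodule.Build k tensor tscaleA tscale1 tscaleDr tscaleDl.
Definition tm (v : V) (w : W) : tensor := tmk [:: (1, (v, w))].
Lemma tl_tm (U : lmodType k) (b : V -> W -> U) v w : bilin b -> tl b (tm v w) = b v w.
Proof. by move=> hb; rewrite tl_pi // /tsum big_seq1 scale1r. Qed.
Lemma tl_lin (U : lmodType k) (b : V -> W -> U) : bilin b -> lin (tl b).
Proof.
by move=> hb a x y; rewrite -[a *: x + y]/(tadd (tscale a x) y) tl_add // tl_scale.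
Qed.
Lemma tm_bilin : bilin tm.
Proof.
split=> [w|v] a x y; apply: tensor_ext => U b hb.
  rewrite -[a *: tm x w + _]/(tadd (tscale a (tm x w)) (tm y w)) tl_add // tl_scale // !tl_tm //.
  by case: hb => h _; apply: h.
rewrite -[a *: tm v x + _]/(tadd (tscale a (tm v x)) (tm v y)) tl_add // tl_scale // !tl_tm //.
by case: hb => _ h; apply: h.
Qed.
End Tensor.

Section EqSub.
Variables (k : fieldType) (V W : lmodType k) (f g : V -> W).
Variables (hf : lin f) (hg : lin g).
Definition eqsub_of of lin f & lin g := {x : V | `[< f x = g x >]}.
Local Notation eqsub := (eqsub_of hf hg).
HB.instance Definition _ := Choice.on eqsub.
Lemma lin0 (h : V -> W) : lin h -> h 0 = 0.
Proof.
move=> hh; have e := hh 1 0 0; rewrite !scale1r addr0 in e.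
by apply: (addrI (h 0)); rewrite addr0 -e.
Qed.
Lemma eqsub_comb (a : k) (x y : V) :
  `[< f x = g x >] -> `[< f y = g y >] -> `[< f (a *: x + y) = g (a *: x + y) >].
Proof. by move=> /asboolP ex /asboolP ey; apply/asboolP; rewrite hf hg ex ey. Qed.
Lemma eqsub0 : `[< f 0 = g 0 >].
Proof. by apply/asboolP; rewrite !lin0. Qed.
Definition es0 : eqsub := exist _ 0 eqsub0.
Definition esc (a : k) (x y : eqsub) : eqsub :=
  exist _ (a *: val x + val y) (eqsub_comb a (valP x) (valP y)).
Definition esadd (x y : eqsub) := esc 1 x y.
Definition esscale (a : k) (x : eqsub) := esc a x es0.
Definition esopp (x : eqsub) := esscale (-1) x.
Lemma esaddA : associative esadd.
Proof. by move=> x y z; apply: val_inj; rewrite /= !scale1r addrA. Qed.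
Lemma esaddC : commutative esadd.
Proof. by move=> x y; apply: val_inj; rewrite /= !scale1r addrC. Qed.
Lemma esadd0 : left_id es0 esadd.
Proof. by move=> x; apply: val_inj; rewrite /= scaler0 add0r. Qed.
Lemma esaddN : left_inverse es0 esopp esadd.
Proof. by move=> x; apply: val_inj; rewrite /= scale1r addr0 scaleN1r addNr. Qed.
HB.instance Definition _ := GRing.isZmodule.Build eqsub esaddA esaddC esadd0 esaddN.
Lemma esscaleA a b v : esscale a (esscale b v) = esscale (a * b) v.
Proof. by apply: val_inj; rewrite /= !addr0 scalerA. Qed.
Lemma esscale1 : left_id 1 esscale.
Proof. by move=> x; apply: val_inj; rewrite /= addr0 scale1r. Qed.
Lemma esscaleDr : right_distributive esscale +%R.
Proof. by move=> a x y; apply: val_inj; rewrite /= !addr0 !scale1r scalerDr. Qed.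
Lemma esscaleDl v : {morph esscale^~ v : a b / a + b}.
Proof. by move=> a b; apply: val_inj; rewrite /= !addr0 !scale1r scalerDl. Qed.
HB.instance Definition _ := GRing.Zmodule_isLmodule.Build k eqsub esscaleA esscale1 esscaleDr esscaleDl.
End EqSub.

(* Dual quasi-bialgebras (Sweedler notation is encoded with tl: for   *)
(* a bilinear f, tl f (D h) = sum f h_1 h_2).                          *)
Section DQB.
Variables (k : fieldType) (H : lmodType k).
Variables (D : H -> tensor H H) (e : H -> k) (m : H -> H -> H) (u : H).
Variables (w wi : H -> H -> H -> k).

Definition slin (V : lmodType k) (f : V -> k) :=
  forall (a : k) (x y : V), f (a *: x + y) = a * f x + f y.
Definition strilin (f : H -> H -> H -> k) :=
  (forall y z, slin (fun x => f x y z)) /\ (forall x z, slin (fun y => f x y z))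
  /\ (forall x y, slin (fun z => f x y z)).

Definition sw (U : lmodType k) (f : H -> H -> U) (h : H) : U := tl f (D h).
Definition ssw (f : H -> H -> k) (h : H) : k := @tl k H H k^o f (D h).
Definition sw3 (U : lmodType k) (f : H -> H -> H -> U) (h : H) : U :=
  sw (fun a b => sw (fun b1 b2 => f a b1 b2) b) h.
Definition ssw3 (f : H -> H -> H -> k) (h : H) : k :=
  ssw (fun a b => ssw (fun b1 b2 => f a b1 b2) b) h.

Definition conv3 (f g : H -> H -> H -> k) (x y z : H) : k :=
  ssw (fun x1 x2 => ssw (fun y1 y2 => ssw (fun z1 z2 =>
    f x1 y1 z1 * g x2 y2 z2) z) y) x.

Definition is_dqb : Prop :=
  [/\
    [/\ lin D, slin e,
      (forall h, sw (fun a b => sw (fun a1 a2 => tm a1 (tm a2 b)) a) h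
                 = sw (fun a b => tm a (D b)) h),
      (forall h, sw (fun a b => e a *: b) h = h) &
      (forall h, sw (fun a b => e b *: a) h = h)],
    [/\ bilin m,
      (forall h l, D (m h l) = sw (fun h1 h2 => sw (fun l1 l2 => tm (m h1 l1) (m h2 l2)) l) h),
      (forall h l, e (m h l) = e h * e l),
      D u = tm u u /\ e u = 1 &
      (forall h, m u h = h /\ m h u = h)],
    [/\ strilin w, strilin wi,
      (forall x y z, conv3 w wi x y z = e x * e y * e z),
      (forall x y z, conv3 wi w x y z = e x * e y * e z) &
      (forall x y, w u x y = e u * e x * e y /\ w x u y = e x * e u * e y
                   /\ w x y u = e x * e y * e u)],
    (forall h g l n,
      ssw (fun h1 h2 => ssw (fun g1 g2 => ssw (fun l1 l2 => ssw (fun n1 n2 =>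
        w h1 g1 (m l1 n1) * w (m h2 g2) l2 n2) n) l) g) h
      = ssw (fun h1 h2 => ssw3 (fun g1 g2 g3 => ssw3 (fun l1 l2 l3 => ssw (fun n1 n2 =>
        w g1 l1 n1 * w h1 (m g2 l2) n2 * w h2 g3 l3) n) l) g) h) &
    (forall h g l,
      sw (fun h1 h2 => sw (fun g1 g2 => sw (fun l1 l2 =>
        w h2 g2 l2 *: m h1 (m g1 l1)) l) g) h
      = sw (fun h1 h2 => sw (fun g1 g2 => sw (fun l1 l2 =>
        w h1 g1 l1 *: m (m h2 g2) l2) l) g) h)].
End DQB.

Record dqbialg (k : fieldType) := DQBialg {
  dq_car :> lmodType k;
  dq_D : dq_car -> tensor dq_car dq_car;
  dq_e : dq_car -> k;
  dq_m : dq_car -> dq_car -> dq_car;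
  dq_u : dq_car;
  dq_w : dq_car -> dq_car -> dq_car -> k;
  dq_wi : dq_car -> dq_car -> dq_car -> k;
  dq_ax : is_dqb dq_D dq_e dq_m dq_u dq_w dq_wi }.

Section Comodules.
Variables (k : fieldType) (H : dqbialg k).
Local Notation HH := (@dq_car _ H).
Local Notation D := (@dq_D _ H).
Local Notation e := (@dq_e _ H).
Local Notation m := (@dq_m _ H).
Local Notation u := (@dq_u _ H).
Local Notation w := (@dq_w _ H).
Local Notation wi := (@dq_wi _ H).
Local Notation sw := (sw D).
Local Notation sw3 := (sw3 D).

Definition is_lcomod (V : lmodType k) (rl : V -> tensor HH V) : Prop :=
  [/\ lin rl,
    (forall x, tl (fun a v => sw (fun a1 a2 => tm a1 (tm a2 v)) a) (rl x)
               = tl (fun a v => tm a (rl v)) (rl x)) &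
    (forall x, tl (fun a v => e a *: v) (rl x) = x)].

Definition is_rcomod (V : lmodType k) (rr : V -> tensor V HH) : Prop :=
  [/\ lin rr,
    (forall x, tl (fun v a => sw (fun a1 a2 => tm (tm v a1) a2) a) (rr x)
               = tl (fun v a => tm (rr v) a) (rr x)) &
    (forall x, tl (fun v a => e a *: v) (rr x) = x)].

Record lcomod := LComod {
  lc_car :> lmodType k;
  lc_rho : lc_car -> tensor HH lc_car;
  lc_ax : is_lcomod lc_rho }.

Definition is_dqhbimod (M : lmodType k) (rl : M -> tensor HH M) (rr : M -> tensor M HH)
    (act : M -> H -> M) : Prop :=
  [/\ is_lcomod rl, is_rcomod rr,
    (forall x, tl (fun a v => tl (fun v0 b => tm (tm a v0) b) (rr v)) (rl x)
               = tl (fun v b => tm (rl v) b) (rr x)),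
    [/\ bilin act,
      (forall x h, rl (act x h)
         = tl (fun a x0 => sw (fun h1 h2 => tm (m a h1) (act x0 h2)) h) (rl x)) &
      (forall x h, rr (act x h)
         = tl (fun x0 a => sw (fun h1 h2 => tm (act x0 h1) (m a h2)) h) (rr x))] &
    (forall x, act x u = x) /\
    (forall x h l, act (act x h) l
       = tl (fun a x' => tl (fun x0 b => sw3 (fun h1 h2 h3 => sw3 (fun l1 l2 l3 =>
            (wi a h1 l1 * w b h3 l3) *: act x0 (m h2 l2)) l) h) (rr x')) (rl x))].

Record dqhbimod := DQHBimod {
  bm_car :> lmodType k;
  bm_l : bm_car -> tensor HH bm_car;
  bm_r : bm_car -> tensor bm_car H;
  bm_act : bm_car -> H -> bm_car;
  bm_rlin : lin bm_r;
  bm_ax : is_dqhbimod bm_l bm_r bm_act }.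

Lemma tm_lin1 (V W : lmodType k) (y : W) : lin (fun x : V => tm x y).
Proof. by case: (tm_bilin V W) => h _; apply: h. Qed.

Definition coinv (M : dqhbimod) : lmodType k :=
  eqsub_of (@bm_rlin M) (@tm_lin1 M HH u).

Definition adj_unit (N : lcomod) (n : N) : tensor N H := tm n u.
Definition FN_rcoact (N : lcomod) : tensor N H -> tensor (tensor N HH) H :=
  tl (fun n h => sw (fun h1 h2 => tm (tm n h1) h2) h).
Definition adj_counit (M : dqhbimod) : tensor (coinv M) HH -> M :=
  tl (fun (x : coinv M) h => bm_act (val x) h).

(* (i) : the adjunction (F, G) is an equivalence: every component of the
   unit and of the counit is an isomorphism (i.e. bijective) *)
Definition adj_equivalence : Prop :=
  (forall N : lcomod,
     injective (@adj_unit N) /\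
     (forall x : tensor N H, FN_rcoact x = tm x u -> exists n, adj_unit n = x))
  /\ (forall M : dqhbimod, bijective (@adj_counit M)).

Definition cond_ii : Prop :=
  forall M : dqhbimod, exists tau : M -> coinv M,
    [/\ lin tau,
      (forall (x : M) (h : HH), val (tau (bm_act x h))
         = tl (fun x0 x1 => tl (fun a y => wi a x1 h *: y) (bm_l (val (tau x0)))) (bm_r x)),
      (forall x : M, tl (fun a x0 => tm a (val (tau x0))) (bm_l x)
         = tl (fun x0 x1 => tl (fun a y => tm (m a x1) y) (bm_l (val (tau x0)))) (bm_r x)) &
      (forall x : M, tl (fun x0 x1 => bm_act (val (tau x0)) x1) (bm_r x) = x)].

Definition cond_iii : Prop :=
  forall M : dqhbimod, exists tau : M -> coinv M,
    [/\ lin tau,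
      (forall x : M, tl (fun x0 x1 => bm_act (val (tau x0)) x1) (bm_r x) = x) &
      (forall (x : M) (h : HH), bm_r x = tm x u -> val (tau (bm_act x h)) = e h *: x)].
End Comodules.

(* Main.v *)
Require Import Defs.
From HB Require Import structures.
From mathcomp Require Import all_boot all_algebra.
From mathcomp Require Import boolp.
From mathcomp Require Import ring.
Set Implicit Arguments. Unset Strict Implicit. Unset Printing Implicit Defensive.
Import GRing.Theory.
Local Open Scope ring_scope.

Section Gen.
Variable k : fieldType.

Lemma lin_scale0 (V W : lmodType k) (L : V -> W) : lin L -> forall c x, L (c *: x) = c *: L x.
Proof. by move=> hL c x; rewrite -[c *: x]addr0 hL lin0 // addr0. Qed.

Lemma tl_push (V W U U' : lmodType k) (L : U -> U') (f : V -> W -> U) x :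
  lin L -> L (tl f x) = tl (fun a b => L (f a b)) x.
Proof.
move=> hL; rewrite /tl /tsum; elim: (repr x) => [|z s IH].
  by rewrite !big_nil lin0.
by rewrite !big_cons hL IH.
Qed.

Lemma eq_tl (V W U : lmodType k) (f g : V -> W -> U) x :
  (forall a b, f a b = g a b) -> tl f x = tl g x.
Proof. by move=> h; rewrite /tl /tsum; apply: eq_bigr => z _; rewrite h. Qed.

Lemma tl_pt (V W U : lmodType k) (f g : V -> W -> U) c x :
  tl (fun a b => c *: f a b + g a b) x = c *: tl f x + tl g x.
Proof.
rewrite /tl /tsum; elim: (repr x) => [|z s IH].
  by rewrite !big_nil scaler0 addr0.
rewrite !big_cons IH !scalerDr !scalerA mulrC addrACA.
by [].
Qed.

Lemma lin_tl_fun (X V W U : lmodType k) (F : X -> V -> W -> U) x :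
  (forall a b, lin (fun v => F v a b)) -> lin (fun v => tl (F v) x).
Proof.
move=> h c v1 v2; rewrite -tl_pt; apply: eq_tl => a b; exact: h.
Qed.

Lemma lin_tl_arg (X V W U : lmodType k) (f : V -> W -> U) (g : X -> tensor V W) :
  bilin f -> lin g -> lin (fun v => tl f (g v)).
Proof. by move=> hf hg c x y; rewrite hg tl_lin. Qed.

Lemma lin_id (V : lmodType k) : lin (fun v : V => v). Proof. by []. Qed.

Lemma lin_comp (X V W : lmodType k) (f : V -> W) (g : X -> V) :
  lin f -> lin g -> lin (fun v => f (g v)).
Proof. by move=> hf hg c x y; rewrite hg hf. Qed.

Lemma lin_scale (X W : lmodType k) c (g : X -> W) : lin g -> lin (fun v => c *: g v).
Proof. by move=> hg a x y; rewrite hg scalerDr !scalerA mulrC. Qed.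

Lemma lin_scal (X W : lmodType k) (s : X -> k) (y : W) : slin s -> lin (fun v => s v *: y).
Proof. by move=> hs a x z; rewrite hs scalerDl scalerA. Qed.


Lemma slin_comp (X V : lmodType k) (s : V -> k) (g : X -> V) :
  slin s -> lin g -> slin (fun v => s (g v)).
Proof. by move=> hs hg a x y; rewrite hg hs. Qed.

Lemma slin_mull (X : lmodType k) c (s : X -> k) : slin s -> slin (fun v => c * s v).
Proof. by move=> hs a x y; rewrite hs mulrDr mulrCA. Qed.

Lemma slin_mulr (X : lmodType k) c (s : X -> k) : slin s -> slin (fun v => s v * c).
Proof. by move=> hs a x y; rewrite hs mulrDl mulrA. Qed.

Lemma slin_lin (X : lmodType k) (s : X -> k) : slin s -> @lin k X k^o s.
Proof. by []. Qed.

Lemma lin_slin (X : lmodType k) (s : X -> k) : @lin k X k^o s -> slin s.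
Proof. by []. Qed.

Lemma tl_tm_id (V W : lmodType k) (x : tensor V W) : tl (@tm k V W) x = x.
Proof.
apply: tensor_ext => U b hb.
by rewrite tl_push; [apply: eq_tl => a c; rewrite tl_tm | apply: tl_lin].
Qed.

Lemma tensor_lin_ext (V W U : lmodType k) (L1 L2 : tensor V W -> U) :
  lin L1 -> lin L2 -> (forall v w, L1 (tm v w) = L2 (tm v w)) -> forall x, L1 x = L2 x.
Proof.
move=> h1 h2 h x; rewrite -[x]tl_tm_id !tl_push //; exact: eq_tl.
Qed.

Lemma tm_lin2 (V W : lmodType k) (v : V) : lin (@tm k V W v).
Proof. by case: (tm_bilin V W) => _ h; apply: h. Qed.
Lemma tm_lin1' (V W : lmodType k) (w : W) : lin (fun v : V => tm v w).
Proof. by case: (tm_bilin V W) => h _; apply: h. Qed.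
End Gen.

Section Gen2.
Variable k : fieldType.
Lemma lin_bil1 (X V W U : lmodType k) (f : V -> W -> U) (L : X -> V) y :
  bilin f -> lin L -> lin (fun v => f (L v) y).
Proof. move=> [h _] hL; exact: (lin_comp (f := fun x => f x y)). Qed.
Lemma lin_bil2 (X V W U : lmodType k) (f : V -> W -> U) (L : X -> W) x :
  bilin f -> lin L -> lin (fun v => f x (L v)).
Proof. move=> [_ h] hL; exact: (lin_comp (f := fun y => f x y)). Qed.
End Gen2.
Section Gen3.
Variable k : fieldType.
Lemma tmZ1 (V W : lmodType k) c (v : V) (w : W) : tm (c *: v) w = c *: tm v w.
Proof. by rewrite (lin_scale0 (L := fun y => tm y w)) //; exact: tm_lin1'. Qed.
Lemma tmZ2 (V W : lmodType k) c (v : V) (w : W) : tm v (c *: w) = c *: tm v w.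
Proof. by rewrite (lin_scale0 (L := fun y => tm v y)) //; exact: tm_lin2. Qed.
End Gen3.
Section DQ.
Variables (k : fieldType) (H : dqbialg k).
Local Notation HH := (@dq_car _ H).
Local Notation D := (@dq_D _ H).
Local Notation e := (@dq_e _ H).
Local Notation m := (@dq_m _ H).
Local Notation u := (@dq_u _ H).
Local Notation w := (@dq_w _ H).
Local Notation wi := (@dq_wi _ H).

Lemma ax_linD : lin D. Proof. by case: (dq_ax H) => [[]]. Qed.
Lemma ax_e : slin e. Proof. by case: (dq_ax H) => [[]]. Qed.
Lemma ax_cL h : sw D (fun a b => e a *: b) h = h. Proof. by case: (dq_ax H) => [[]]. Qed.
Lemma ax_cR h : sw D (fun a b => e b *: a) h = h. Proof. by case: (dq_ax H) => [[]]. Qed.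
Lemma ax_m : bilin m. Proof. by case: (dq_ax H) => _ []. Qed.
Lemma ax_em h l : e (m h l) = e h * e l. Proof. by case: (dq_ax H) => _ []. Qed.
Lemma ax_Du : D u = tm u u. Proof. by case: (dq_ax H) => _ [_ _ _ []]. Qed.
Lemma ax_eu : e u = 1. Proof. by case: (dq_ax H) => _ [_ _ _ []]. Qed.
Lemma ax_mu h : m u h = h. Proof. by case: (dq_ax H) => _ [_ _ _ _ h1]; case: (h1 h). Qed.
Lemma ax_mu' h : m h u = h. Proof. by case: (dq_ax H) => _ [_ _ _ _ h1]; case: (h1 h). Qed.
Lemma ax_w : strilin w. Proof. by case: (dq_ax H) => _ _ []. Qed.
Lemma ax_wi : strilin wi. Proof. by case: (dq_ax H) => _ _ []. Qed.
Lemma ax_conv x y z : conv3 D wi w x y z = e x * e y * e z.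
Proof. by case: (dq_ax H) => _ _ []. Qed.
Lemma ax_wu x y : w u x y = e x * e y.
Proof. by case: (dq_ax H) => _ _ [_ _ _ _ h]; case: (h x y) => -> _; rewrite ax_eu mul1r. Qed.

Lemma lin_e_scal (X W : lmodType k) (L : X -> HH) (y : W) : lin L -> lin (fun v => e (L v) *: y).
Proof. by move=> hL; apply: lin_scal; apply: slin_comp => //; exact: ax_e. Qed.

Lemma swL (U : lmodType k) (L : HH -> U) h : lin L -> sw D (fun a b => e a *: L b) h = L h.
Proof.
move=> hL; rewrite -{2}[h]ax_cL /sw tl_push //; apply: eq_tl => a b.
by rewrite lin_scale0.
Qed.
Lemma swR (U : lmodType k) (L : HH -> U) h : lin L -> sw D (fun a b => e b *: L a) h = L h.
Proof.
move=> hL; rewrite -{2}[h]ax_cR /sw tl_push //; apply: eq_tl => a b.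
by rewrite lin_scale0.
Qed.

Lemma lin_m1 (X : lmodType k) (L : X -> HH) b : lin L -> lin (fun v => m (L v) b).
Proof. move=> hL; apply: (lin_comp (f := fun x => m x b)) => //; by case: ax_m => h _; apply: h. Qed.
Lemma lin_m2 (X : lmodType k) (L : X -> HH) a : lin L -> lin (fun v => m a (L v)).
Proof. move=> hL; apply: (lin_comp (f := fun x => m a x)) => //; by case: ax_m => _ h; apply: h. Qed.
Lemma lin_D (X : lmodType k) (L : X -> HH) : lin L -> lin (fun v => D (L v)).
Proof. move=> hL; apply: (lin_comp (f := D)) => //; exact: ax_linD. Qed.
Lemma lin_tmA (X V W : lmodType k) (L : X -> V) (b : W) : lin L -> lin (fun v => tm (L v) b).
Proof. move=> hL; apply: (lin_comp (f := fun x => tm x b)) => //; exact: tm_lin1'. Qed.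
Lemma lin_tmB (X V W : lmodType k) (L : X -> W) (a : V) : lin L -> lin (fun v => tm a (L v)).
Proof. move=> hL; apply: (lin_comp (f := fun x => tm a x)) => //; exact: tm_lin2. Qed.
Lemma slin_e (X : lmodType k) (L : X -> HH) : lin L -> slin (fun v => e (L v)).
Proof. by move=> hL; apply: slin_comp => //; exact: ax_e. Qed.
Lemma slin_w1 (X : lmodType k) (L : X -> HH) b c : lin L -> slin (fun v => w (L v) b c).
Proof. move=> hL; apply: (slin_comp (s := fun x => w x b c)) => //; by case: ax_w. Qed.
Lemma slin_w2 (X : lmodType k) (L : X -> HH) a c : lin L -> slin (fun v => w a (L v) c).
Proof. move=> hL; apply: (slin_comp (s := fun x => w a x c)) => //; by case: ax_w => _ []. Qed.
Lemma slin_w3 (X : lmodType k) (L : X -> HH) a b : lin L -> slin (fun v => w a b (L v)).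
Proof. move=> hL; apply: (slin_comp (s := fun x => w a b x)) => //; by case: ax_w => _ []. Qed.
Lemma slin_wi1 (X : lmodType k) (L : X -> HH) b c : lin L -> slin (fun v => wi (L v) b c).
Proof. move=> hL; apply: (slin_comp (s := fun x => wi x b c)) => //; by case: ax_wi. Qed.
Lemma slin_wi2 (X : lmodType k) (L : X -> HH) a c : lin L -> slin (fun v => wi a (L v) c).
Proof. move=> hL; apply: (slin_comp (s := fun x => wi a x c)) => //; by case: ax_wi => _ []. Qed.
Lemma slin_wi3 (X : lmodType k) (L : X -> HH) a b : lin L -> slin (fun v => wi a b (L v)).
Proof. move=> hL; apply: (slin_comp (s := fun x => wi a b x)) => //; by case: ax_wi => _ []. Qed.
End DQ.

Section DQ2.
Variables (k : fieldType) (H : dqbialg k).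
Local Notation HH := (@dq_car _ H).
Local Notation D := (@dq_D _ H).
Local Notation e := (@dq_e _ H).
Lemma sw_push (U U' : lmodType k) (L : U -> U') (f : HH -> HH -> U) h :
  lin L -> L (sw D f h) = sw D (fun a b => L (f a b)) h.
Proof. by move=> hL; rewrite /sw tl_push. Qed.
Lemma sw3_push (U U' : lmodType k) (L : U -> U') (f : HH -> HH -> HH -> U) h :
  lin L -> L (sw3 D f h) = sw3 D (fun a b c => L (f a b c)) h.
Proof. by move=> hL; rewrite /sw3 /sw tl_push //; apply: eq_tl => a b; rewrite tl_push. Qed.
Lemma sw_ext (U : lmodType k) (f g : HH -> HH -> U) h :
  (forall a b, f a b = g a b) -> sw D f h = sw D g h.
Proof. by move=> hf; apply: eq_tl. Qed.
Lemma sw3_ext (U : lmodType k) (f g : HH -> HH -> HH -> U) h :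
  (forall a b c, f a b c = g a b c) -> sw3 D f h = sw3 D g h.
Proof. by move=> hf; apply: eq_tl => a b; apply: eq_tl. Qed.
Lemma sw3_collapse (U : lmodType k) (s : HH -> k) (V : U) h :
  slin s -> sw3 D (fun l1 l2 l3 => (s l1 * e l2 * e l3) *: V) h = s h *: V.
Proof.
move=> hs; rewrite /sw3.
rewrite (sw_ext (g := fun l1 b => e b *: (s l1 *: V))); last first.
  move=> l1 b; rewrite (sw_ext (g := fun l2 l3 => e l2 *: ((s l1 * e l3) *: V))).
    rewrite (swL (L := fun l3 => (s l1 * e l3) *: V)); first by rewrite !scalerA mulrC.
    by apply: lin_scal; apply: slin_mull; apply: slin_e.
  by move=> l2 l3; rewrite scalerA; congr (_ *: _); ring.
by rewrite (swR (L := fun l1 => s l1 *: V)) //; apply: lin_scal.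
Qed.
End DQ2.
Section Mod.
Variables (k : fieldType) (H : dqbialg k) (M : dqhbimod H).
Local Notation HH := (@dq_car _ H).
Local Notation D := (@dq_D _ H).
Local Notation e := (@dq_e _ H).
Local Notation m := (@dq_m _ H).
Local Notation u := (@dq_u _ H).
Local Notation w := (@dq_w _ H).
Local Notation wi := (@dq_wi _ H).
Local Notation rl := (@bm_l _ H M).
Local Notation rr := (@bm_r _ H M).
Local Notation act := (@bm_act _ H M).

Lemma ax_ll : lin rl. Proof. by case: (bm_ax M) => [[]]. Qed.
Lemma ax_lc x : tl (fun a v => e a *: v) (rl x) = x. Proof. by case: (bm_ax M) => [[]]. Qed.
Lemma ax_rl : lin rr. Proof. exact: bm_rlin. Qed.
Lemma ax_rc x : tl (fun v a => e a *: v) (rr x) = x. Proof. by case: (bm_ax M) => _ []. Qed.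
Lemma ax_comm x : tl (fun a v => tl (fun v0 b => tm (tm a v0) b) (rr v)) (rl x)
               = tl (fun v b => tm (rl v) b) (rr x).
Proof. by case: (bm_ax M). Qed.
Lemma ax_act : bilin act. Proof. by case: (bm_ax M) => _ _ _ []. Qed.
Lemma ax_lcol x h : rl (act x h)
         = tl (fun a x0 => sw D (fun h1 h2 => tm (m a h1) (act x0 h2)) h) (rl x).
Proof. by case: (bm_ax M) => _ _ _ []. Qed.
Lemma ax_rcol x h : rr (act x h)
         = tl (fun x0 a => sw D (fun h1 h2 => tm (act x0 h1) (m a h2)) h) (rr x).
Proof. by case: (bm_ax M) => _ _ _ []. Qed.
Lemma ax_actu x : act x u = x. Proof. by case: (bm_ax M) => _ _ _ _ []. Qed.
Lemma ax_mod x h l : act (act x h) l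
       = tl (fun a x' => tl (fun x0 b => sw3 D (fun h1 h2 h3 => sw3 D (fun l1 l2 l3 =>
            (wi a h1 l1 * w b h3 l3) *: act x0 (m h2 l2)) l) h) (rr x')) (rl x).
Proof. by case: (bm_ax M) => _ _ _ _ []. Qed.

Lemma lin_act1 (X : lmodType k) (L : X -> M) h : lin L -> lin (fun v => act (L v) h).
Proof. move=> hL; apply: (lin_comp (f := fun x => act x h)) => //; by case: ax_act => hh _; apply: hh. Qed.
Lemma lin_act2 (X : lmodType k) (L : X -> HH) x : lin L -> lin (fun v => act x (L v)).
Proof. move=> hL; apply: (lin_comp (f := fun y => act x y)) => //; by case: ax_act => _ hh; apply: hh. Qed.
Lemma lin_rl (X : lmodType k) (L : X -> M) : lin L -> lin (fun v => rl (L v)).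
Proof. move=> hL; apply: (lin_comp (f := rl)) => //; exact: ax_ll. Qed.
Lemma lin_rr (X : lmodType k) (L : X -> M) : lin L -> lin (fun v => rr (L v)).
Proof. move=> hL; apply: (lin_comp (f := rr)) => //; exact: ax_rl. Qed.
Lemma lin_val (X : lmodType k) (L : X -> coinv M) : lin L -> lin (fun v => val (L v)).
Proof.
move=> hL; apply: (lin_comp (f := fun y : coinv M => val y)) => // a x y.
by rewrite /= scale1r addr0.
Qed.
End Mod.
Ltac lint := try rewrite /sw3; try rewrite /sw; first
  [ exact: lin_id
  | apply: lin_act1; lint | apply: lin_act2; lint
  | apply: lin_m1; lint | apply: lin_m2; lint
  | apply: lin_tmA; lint | apply: lin_tmB; lint
  | apply: lin_rl; lint | apply: lin_rr; lint | apply: lin_val; lint | apply: lin_D; lint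
  | apply: lin_scale; lint
  | apply: lin_scal; slint
  | solve [apply: lin_tl_arg; [bilt | lint]]
  | solve [apply: lin_tl_fun => ? ?; lint]
  | assumption
  | (apply: lin_bil1; [eassumption | lint])
  | (apply: lin_bil2; [eassumption | lint])
  | (apply: lin_comp; [eassumption | lint]) ]
with slint := first
  [ apply: slin_e; lint
  | apply: slin_w1; lint | apply: slin_w2; lint | apply: slin_w3; lint
  | apply: slin_wi1; lint | apply: slin_wi2; lint | apply: slin_wi3; lint
  | apply: slin_mull; slint | apply: slin_mulr; slint ]
with bilt := split => ?; lint.

Section Tau.
Variables (k : fieldType) (H : dqbialg k) (M : dqhbimod H).
Local Notation HH := (@dq_car _ H).
Local Notation D := (@dq_D _ H).
Local Notation e := (@dq_e _ H).
Local Notation m := (@dq_m _ H).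
Local Notation u := (@dq_u _ H).
Local Notation w := (@dq_w _ H).
Local Notation wi := (@dq_wi _ H).
Local Notation rl := (@bm_l _ H M).
Local Notation rr := (@bm_r _ H M).
Local Notation act := (@bm_act _ H M).

Lemma coinvP (y : coinv M) : rr (val y) = tm (val y) u.
Proof. exact/asboolP/(valP y). Qed.

Lemma rr_act_coinv x h : rr x = tm x u -> rr (act x h) = sw D (fun h1 h2 => tm (act x h1) h2) h.
Proof.
move=> hx; rewrite ax_rcol hx tl_tm; last by bilt.
by apply: sw_ext => a b; rewrite ax_mu.
Qed.

Variable tau : M -> coinv M.
Hypothesis htau : lin tau.
Hypothesis h1 : forall x : M, tl (fun x0 x1 => act (val (tau x0)) x1) (rr x) = x.
Hypothesis h2 : forall (x : M) (h : HH), rr x = tm x u -> val (tau (act x h)) = e h *: x.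

Lemma tauv_act (y : coinv M) h : val (tau (act (val y) h)) = e h *: val y.
Proof. by rewrite h2 // coinvP. Qed.

Lemma tau_coinv x : rr x = tm x u -> val (tau x) = x.
Proof. by move=> hx; rewrite -{1}(ax_actu x) h2 // ax_eu scale1r. Qed.

Lemma tauZ c x : val (tau (c *: x)) = c *: val (tau x).
Proof. apply: (lin_scale0 (L := fun z => val (tau z))); lint. Qed.

Lemma key (U : lmodType k) (f : HH -> M -> U) (y : M) : bilin f -> rr y = tm y u ->
  tl f (rl y) = tl (fun a v => f a (val (tau v))) (rl y).
Proof.
move=> hf hy.
have E1 : tl f (rl y) = tl (fun a v => tl (fun x0 x1 => f a (act (val (tau x0)) x1)) (rr v)) (rl y).
  apply: eq_tl => a v; rewrite -{1}[v]h1 tl_push //; lint.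
pose T := tl (fun p b => tl (fun a v0 => f a (act (val (tau v0)) b)) p).
have hT : lin T by apply: tl_lin; bilt.
have := congr1 T (ax_comm y).
rewrite hy tl_tm; last by bilt.
rewrite /T tl_tm; last by bilt.
rewrite tl_push //.
rewrite (eq_tl (g := fun a v => tl (fun x0 x1 => f a (act (val (tau x0)) x1)) (rr v))); last first.
  move=> a v; rewrite tl_push //; apply: eq_tl => v0 b.
  rewrite tl_tm; last by bilt.
  rewrite tl_tm //; bilt.
rewrite -E1 => ->; apply: eq_tl => a v; by rewrite ax_actu.
Qed.

Lemma iii_ii_2 (x : M) : tl (fun a x0 => tm a (val (tau x0))) (rl x)
  = tl (fun x0 x1 => tl (fun a y => tm (m a x1) y) (rl (val (tau x0)))) (rr x).
Proof.
have -> : rl x = rl (tl (fun x0 x1 => act (val (tau x0)) x1) (rr x)) by rewrite h1.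
rewrite (tl_push (L := rl)); last exact: ax_ll.
rewrite tl_push; last by apply: tl_lin; bilt.
apply: eq_tl => x0 x1.
have hz := coinvP (tau x0).
rewrite ax_lcol tl_push; last by apply: tl_lin; bilt.
rewrite [LHS](key (y := val (tau x0))) //; last by bilt.
rewrite [RHS](key (y := val (tau x0))) //; last by bilt.
apply: eq_tl => a v.
rewrite sw_push; last by apply: tl_lin; bilt.
rewrite (sw_ext (g := fun h1 h2 => e h2 *: tm (m a h1) (val (tau v)))).
  rewrite (swR (L := fun h => tm (m a h) (val (tau v)))) //; lint.
move=> b c; rewrite tl_tm; last by bilt.
by rewrite tauv_act lin_scale0 //; apply: tm_lin2.
Qed.

Lemma iii_ii_1 (x : M) (h : HH) : val (tau (act x h))
  = tl (fun x0 x1 => tl (fun a y => wi a x1 h *: y) (rl (val (tau x0)))) (rr x).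
Proof.
have -> : act x h = tl (fun x0 x1 => act (act (val (tau x0)) x1) h) (rr x).
  by rewrite -(tl_push (L := fun z => act z h)) ?h1 //; lint.
rewrite (tl_push (L := fun z => val (tau z))); last by lint.
apply: eq_tl => x0 x1.
have hz := coinvP (tau x0).
rewrite ax_mod (tl_push (L := fun z => val (tau z))); last by lint.
rewrite [LHS](key (y := val (tau x0))) //; last by bilt.
rewrite [RHS](key (y := val (tau x0))) //; last by bilt.
apply: eq_tl => a v.
rewrite coinvP tl_tm; last by bilt.
set V := val (tau v).
rewrite (sw3_push (L := fun z => val (tau z))); last by lint.
transitivity (sw3 D (fun h1 h2 h3 => ((wi a h1 h * e h2 * e h3) *: V)) x1); last first.
  by apply: sw3_collapse; slint.
apply: sw3_ext => b1 b2 b3.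
rewrite (sw3_push (L := fun z => val (tau z))); last by lint.
rewrite -mulrA.
transitivity (sw3 D (fun l1 l2 l3 => ((wi a b1 l1 * (e b2 * e b3)) * e l2 * e l3) *: V) h); last first.
  by rewrite (sw3_collapse (s := fun l1 => wi a b1 l1 * (e b2 * e b3))) //; slint.
apply: sw3_ext => l1 l2 l3.
rewrite tauZ tauv_act ax_wu ax_em scalerA; congr (_ *: _); ring.
Qed.
End Tau.
Section WI.
Variables (k : fieldType) (H : dqbialg k).
Local Notation HH := (@dq_car _ H).
Local Notation D := (@dq_D _ H).
Local Notation e := (@dq_e _ H).
Local Notation u := (@dq_u _ H).
Local Notation w := (@dq_w _ H).
Local Notation wi := (@dq_wi _ H).

Lemma ax_wu2 x y : w x u y = e x * e y.
Proof. by case: (dq_ax H) => _ _ [_ _ _ _ h]; case: (h x y) => _ [-> _]; rewrite ax_eu mulr1. Qed.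

Lemma sswR (s : HH -> k) h : slin s -> ssw D (fun a b => e b * s a) h = s h.
Proof. move=> hs; exact: (@swR k H k^o s h (slin_lin hs)). Qed.

Lemma wi_u a h : wi a u h = e a * e h.
Proof.
have := ax_conv a u h; rewrite ax_eu mulr1 => <-.
rewrite /conv3.
transitivity (ssw D (fun x1 x2 => e x2 * wi x1 u h) a); first by rewrite sswR //; slint.
rewrite /ssw; apply: (@eq_tl k HH HH k^o) => x1 x2; symmetry.
rewrite ax_Du tl_tm; last first.
  split=> y.
    apply: lin_tl_fun => z1 z2; apply: slin_lin; slint.
  apply: lin_tl_fun => z1 z2; apply: slin_lin; slint.
rewrite -(sswR (s := fun z1 => e x2 * wi x1 u z1)); last by slint.
rewrite /ssw; apply: eq_tl => z1 z2; rewrite ax_wu2 /=; ring.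
Qed.
End WI.

Section Unit.
Variables (k : fieldType) (H : dqbialg k) (N : lcomod H).
Local Notation HH := (@dq_car _ H).
Local Notation D := (@dq_D _ H).
Local Notation e := (@dq_e _ H).
Local Notation u := (@dq_u _ H).

Lemma unit_inj : injective (@adj_unit _ H N).
Proof.
move=> x y /(congr1 (tl (fun (n : N) (h : HH) => e h *: n))).
rewrite /adj_unit !tl_tm; try by bilt.
by rewrite ax_eu !scale1r.
Qed.

Lemma unit_surj (x : tensor N HH) : FN_rcoact x = tm x u -> exists n, adj_unit n = x.
Proof.
move=> hx; exists (tl (fun n h => e h *: n) x).
pose T := tl (fun (p : tensor N HH) (b : HH) => tl (fun n h1 => e h1 *: tm n b) p).
have hT : lin T by apply: tl_lin; bilt.
have := congr1 T hx.
rewrite /T tl_tm; last by bilt.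
rewrite /FN_rcoact tl_push //.
rewrite (eq_tl (g := fun n h => tm n h)); last first.
  move=> n h; rewrite sw_push //.
  rewrite (sw_ext (g := fun h1 h2 => e h1 *: tm n h2)); last first.
    move=> a b; rewrite /T tl_tm; last by bilt.
    by rewrite tl_tm //; bilt.
  by rewrite swL //; exact: tm_lin2.
rewrite tl_tm_id => hx'; rewrite [RHS]hx'.
rewrite /adj_unit (tl_push (L := fun y => tm y u)); last exact: tm_lin1'.
by apply: eq_tl => a b; rewrite tmZ1.
Qed.
End Unit.

Section Counit.
Variables (k : fieldType) (H : dqbialg k) (M : dqhbimod H).
Local Notation HH := (@dq_car _ H).
Local Notation D := (@dq_D _ H).
Local Notation e := (@dq_e _ H).
Local Notation m := (@dq_m _ H).
Local Notation u := (@dq_u _ H).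
Local Notation rl := (@bm_l _ H M).
Local Notation rr := (@bm_r _ H M).
Local Notation act := (@bm_act _ H M).

Lemma val_scale (y : coinv M) c : val (c *: y) = c *: val y.
Proof. by apply: (lin_scale0 (L := fun z : coinv M => val z)); lint. Qed.

Lemma counit_lin : lin (@adj_counit _ H M).
Proof. rewrite /adj_counit; apply: tl_lin; bilt. Qed.

Lemma counit_tm (y : coinv M) h : adj_counit (tm y h) = act (val y) h.
Proof. rewrite /adj_counit tl_tm //; bilt. Qed.

Lemma counit_bij (tau : M -> coinv M) : lin tau ->
  (forall x : M, tl (fun x0 x1 => act (val (tau x0)) x1) (rr x) = x) ->
  (forall (x : M) (h : HH), rr x = tm x u -> val (tau (act x h)) = e h *: x) ->
  bijective (@adj_counit _ H M).
Proof.
move=> htau h1 h2.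
exists (fun x => tl (fun x0 x1 => tm (tau x0) x1) (rr x)).
  apply: (tensor_lin_ext (L2 := id)).
  - apply: (lin_comp (f := fun x => tl (fun x0 x1 => tm (tau x0) x1) (rr x))); last exact: counit_lin.
    lint.
  - by [].
  move=> y h; rewrite counit_tm rr_act_coinv ?coinvP //.
  rewrite sw_push; last by apply: tl_lin; bilt.
  rewrite (sw_ext (g := fun h1 h2 => e h1 *: tm y h2)); last first.
    move=> a b; rewrite tl_tm; last by bilt.
    have -> : tau (act (val y) a) = e a *: y by apply: val_inj; rewrite h2 ?coinvP // val_scale.
    by rewrite tmZ1.
  by rewrite swL //; exact: tm_lin2.
move=> x; rewrite -{2}[x]h1 tl_push; last exact: counit_lin.
by apply: eq_tl => a b; rewrite counit_tm.
Qed.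
End Counit.
Section Final.
Variables (k : fieldType) (H : dqbialg k).
Local Notation HH := (@dq_car _ H).
Local Notation e := (@dq_e _ H).
Local Notation u := (@dq_u _ H).

Lemma iii_i : cond_iii H -> adj_equivalence H.
Proof.
move=> h3; split.
  by move=> N; split; [exact: unit_inj | exact: unit_surj].
move=> M; have [tau [htau c1 c2]] := h3 M.
exact: (counit_bij htau).
Qed.

Lemma iii_ii : cond_iii H -> cond_ii H.
Proof.
move=> h3 M; have [tau [htau c1 c2]] := h3 M.
exists tau; split => //.
- by move=> x h; apply: iii_ii_1.
- by move=> x; apply: iii_ii_2.
Qed.

Lemma ii_iii : cond_ii H -> cond_iii H.
Proof.
move=> h2 M; have [tau [htau c1 c2 c3]] := h2 M.
have tc : forall x, bm_r x = tm x u -> val (tau x) = x.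
  move=> x hx; have := c3 x; rewrite hx tl_tm; last by bilt.
  by rewrite ax_actu.
exists tau; split => // x h hx.
rewrite c1 hx tl_tm; last by bilt.
rewrite (eq_tl (g := fun a y => e h *: (e a *: y))); last first.
  by move=> a y; rewrite wi_u scalerA mulrC.
rewrite -(tl_push (L := fun y => e h *: y)); last by apply: lin_scale; exact: lin_id.
by rewrite ax_lc tc.
Qed.

Lemma i_iii : adj_equivalence H -> cond_iii H.
Proof.
move=> [_ hc] M; have [g c1 c2] := hc M.
have hg : lin g.
  move=> c x y; apply: (can_inj c1).
  by rewrite counit_lin !c2.
pose tau x := tl (fun (y : coinv M) (h : HH) => e h *: y) (g x).
have tau_act : forall (y : coinv M) h, tau (bm_act (val y) h) = e h *: y.
  move=> y h; rewrite /tau -counit_tm c1 tl_tm //; bilt.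
exists tau; split.
- rewrite /tau; lint.
- move=> x; transitivity (adj_counit (g x)); last exact: c2.
  rewrite -{1}(c2 x) /adj_counit (tl_push (L := bm_r (d:=M))); last exact: ax_rl.
  rewrite tl_push; last by apply: tl_lin; bilt.
  apply: eq_tl => y h.
  rewrite rr_act_coinv ?coinvP //.
  rewrite sw_push; last by apply: tl_lin; bilt.
  rewrite (sw_ext (g := fun h1 h2 => e h1 *: bm_act (val y) h2)); last first.
    move=> a b; rewrite tl_tm; last by bilt.
    rewrite tau_act val_scale.
    by apply: (lin_scale0 (L := fun z => bm_act z b)); lint.
  by rewrite swL //; lint.
- move=> x h hx.
  pose y : coinv M := exist (fun z => `[< bm_r z = tm z u >]) x (asboolT hx).
  have -> : x = val y by [].
  by rewrite tau_act val_scale.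
Qed.
End Final.

Unset Implicit Arguments.
Theorem proposition3p3 (k : fieldType) (H : dqbialg k) :
  (adj_equivalence H <-> cond_ii H) /\ (cond_ii H <-> cond_iii H).
Proof.
split; split.
- by move=> h; apply: iii_ii; apply: i_iii.
- by move=> h; apply: iii_i; apply: ii_iii.
- exact: ii_iii.
- exact: iii_ii.
Qed.
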